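(* Let $\xi$ be a DoS sequence with infinitely many intervals $H_n$ that is not an edge case. Then $$\limsup_{n\to\infty}\frac{\lvert\Xi(0,h_n+\tau_n)\rvert}{h_n+\tau_n} = \inf\mathcal{D}(\xi)\quad\text{and}\quad \limsup_{n\to\infty}\frac{n}{h_n}=\inf\mathcal{F}(\xi).$$
   Context: A DoS sequence $\xi=\{H_n\}_{n\in\mathbb{N}_+}$ is a sequence of sets $H_n := \{h_n\}\cup[h_n,h_n+\tau_n)$, where $h_1\geqslant 0$, $\tau_n\geqslant 0$ and $h_{n+1} > h_n+\tau_n$ for all $n$. For $0\leqslant \tau\leqslant s$ let $\Xi(\tau,s) := \bigcup_n H_n\cap[\tau,s]$ and $n_\xi(\tau,s) := \operatorname{card}(\{h_n\}_n\cap[\tau,s])$; $\lvert\cdot\rvert$ denotes Lebesgue measure. A constant $B_d\in[0,1]$ is a duration-bound of $\xi$ if there is a constant $0<\kappa<+\infty$ with $\lvert \Xi(0,t)\rvert\leqslant \kappa + B_d t$ for all $t\geqslant 0$. A constant $B_f\in[0,+\infty)$ is a frequency-bound of $\xi$ if there is an integer $0<\Lambda<+\infty$ with $n_\xi(0,t)\leqslant \Lambda + B_f t$ for all $t\geqslant 0$; if no such finite $B_f$ exists, the frequency-bound is defined to be $+\infty$. $\mathcal{D}(\xi)$ and $\mathcal{F}(\xi)$ denote the sets of all duration-bounds and frequency-bounds of $\xi$. $\xi$ is an edge case if (i) $\inf\mathcal{D}(\xi)=1$, or (ii) $\inf\mathcal{F}(\xi)=+\infty$, or (iii) for every $\Gamma\in(0,+\infty)$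 there is $n$ with $\tau_n>\Gamma$. *)

(* Defs.v *)
From HB Require Import structures.
From mathcomp Require Import all_boot all_order all_algebra.
From mathcomp Require Import all_classical all_reals all_analysis.
Set Implicit Arguments. Unset Strict Implicit. Unset Printing Implicit Defensive.
Import Order.TTheory GRing.Theory Num.Theory.
Local Open Scope classical_set_scope.
Local Open Scope ring_scope.

Section DoS.
Variable R : realType.

(* A DoS sequence with infinitely many intervals, indexed from 0:
   h n, tau n stand for h_{n+1}, tau_{n+1} of the paper. *)
Definition DoS (h tau : nat -> R) : Prop :=
  0 <= h 0%N /\ (forall n, 0 <= tau n) /\ (forall n, h n + tau n < h n.+1).

Definition Hset (h tau : nat -> R) (n : nat) : set R :=
  [set h n] `|` [set x | h n <= x < h n + tau n].

Definition Xi (h tau : nat -> R) (a s : R) : set R :=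
  (\bigcup_n Hset h tau n) `&` [set x | a <= x <= s].

Definition n_xi (h : nat -> R) (a s : R) : \bar R :=
  counting ([set h n | n in [set: nat]] `&` [set x | a <= x <= s]).

Definition is_duration_bound (h tau : nat -> R) (B : R) : Prop :=
  0 <= B <= 1 /\ exists kappa : R, 0 < kappa /\
    forall t : R, 0 <= t ->
      (lebesgue_measure (Xi h tau 0 t) <= (kappa + B * t)%:E)%E.

Definition Dset (h tau : nat -> R) : set (\bar R) :=
  [set x | exists B, x = B%:E /\ is_duration_bound h tau B].

Definition is_freq_bound (h : nat -> R) (B : R) : Prop :=
  0 <= B /\ exists Lambda : nat, (0 < Lambda)%N /\
    forall t : R, 0 <= t -> (n_xi h 0 t <= (Lambda%:R + B * t)%:E)%E.

Definition Fset (h : nat -> R) : set (\bar R) :=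
  [set x | (exists B, x = B%:E /\ is_freq_bound h B) \/
           (x = +oo%E /\ ~ exists B, is_freq_bound h B)].

Definition edge_case (h tau : nat -> R) : Prop :=
  ereal_inf (Dset h tau) = 1%:E \/
  ereal_inf (Fset h) = +oo%E \/
  (forall Gamma : R, 0 < Gamma -> exists n, Gamma < tau n).

End DoS.

(* Main.v *)
Require Import Defs.
From HB Require Import structures.
From mathcomp Require Import all_boot all_order all_algebra.
From mathcomp Require Import all_classical all_reals all_analysis.
From mathcomp Require Import lra.
Import Order.TTheory GRing.Theory Num.Theory.
Local Open Scope classical_set_scope.
Local Open Scope ring_scope.

Set Implicit Arguments. Unset Strict Implicit.

Section Helpers.
Variable R : realType.
Implicit Types u : (\bar R)^nat.

Lemma limn_esupE u : limn_esup u = ereal_inf (range (esups u)).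
Proof. rewrite limn_esup_lim; apply/cvg_lim => //; exact: cvg_esups_inf. Qed.

Lemma limsup_le u l N : (forall k, (N <= k)%N -> (u k <= l)%E) -> (limn_esup u <= l)%E.
Proof.
move=> H; rewrite limn_esupE; apply: (@le_trans _ _ (esups u N)).
  by apply: ereal_inf_lbound; exists N.
apply: ge_ereal_sup => _ [k /= Nk <-]; exact: H.
Qed.

Lemma limsup_lt u l : (limn_esup u < l)%E -> exists N, forall k, (N <= k)%N -> (u k < l)%E.
Proof.
rewrite limn_esupE => /ereal_inf_lt[_ [N _ <-]] HN; exists N => k Nk.
apply: le_lt_trans HN; apply: ereal_sup_ubound; by exists k.
Qed.

Lemma limsup_ge0 u : (forall n, (0 <= u n)%E) -> (0 <= limn_esup u)%E.
Proof.
move=> H; rewrite limn_esupE; apply: le_ereal_inf_tmp => _ [N _ <-].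
apply: le_trans (H N) _; apply: ereal_sup_ubound; by exists N => /=.
Qed.

Lemma natr_big (x : R) : exists n : nat, x < n%:R.
Proof. by exists (Num.truncn x).+1; exact: truncnS_gt. Qed.

End Helpers.

Section Seq.
Variables (R : realType) (h tau : nat -> R).
Hypothesis hD : DoS h tau.

Lemma h_lt n : h n < h n.+1.
Proof. case: hD => _ [t0 hs]; apply: (le_lt_trans _ (hs n)); rewrite lerDl; exact: t0. Qed.

Lemma h_ltn i j : (i < j)%N -> h i < h j.
Proof. exact: (Order.NatMonotonyTheory.homo_ltn_lt h_lt). Qed.

Lemma h_le i j : (i <= j)%N -> h i <= h j.
Proof. rewrite leq_eqVlt => /orP[/eqP->//|/h_ltn/ltW//]. Qed.

Lemma h_ge0 n : 0 <= h n.
Proof. by case: hD => h0 _; apply: (le_trans h0); exact: h_le. Qed.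

Lemma tau_ge0 n : 0 <= tau n.
Proof. by case: hD => _ []. Qed.

Lemma s_le k n : (k <= n)%N -> h k + tau k <= h n + tau n.
Proof.
rewrite leq_eqVlt => /orP[/eqP->//|kn].
case: hD => _ [t0 hs]; apply: ltW; apply: lt_le_trans (hs k) _.
apply: (le_trans (h_le kn)); rewrite lerDl; exact: t0.
Qed.

Lemma itv_ccE (a s : R) : [set x : R | a <= x <= s] = `[a, s]%classic.
Proof. by apply/seteqP; split => x /=; rewrite in_itv. Qed.

Lemma Xi_meas a t : measurable (Xi h tau a t).
Proof.
rewrite /Xi itv_ccE; apply: measurableI => //.
apply: bigcupT_measurable => n; rewrite /Hset; apply: measurableU => //.
rewrite (_ : [set x | _] = `[h n, h n + tau n[%classic) //.
Qed.

Lemma Xi_sub t n : t < h n.+1 -> Xi h tau 0 t `<=` Xi h tau 0 (h n + tau n).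
Proof.
move=> tn x [[k _ Hk] /andP[x0 xt]]; split; first by exists k.
apply/andP; split => //.
have hkx : h k <= x /\ x <= h k + tau k.
  case: Hk => [/= ->|/= /andP[a b]]; last by split => //; exact: ltW.
  by split => //; rewrite lerDl tau_ge0.
have kn : (k <= n)%N.
  rewrite -ltnS ltnNge; apply/negP => nk.
  have := h_le nk; rewrite leNgt => /negP; apply.
  exact: (le_lt_trans (proj1 hkx) (le_lt_trans xt tn)).
exact: (le_trans (proj2 hkx) (s_le kn)).
Qed.

Lemma Xi_mono t s : t <= s -> Xi h tau 0 t `<=` Xi h tau 0 s.
Proof.
move=> ts x [a /andP[b c]]; split => //; apply/andP; split => //; exact: (le_trans c ts).
Qed.

Lemma m_le t : 0 <= t -> (lebesgue_measure (Xi h tau 0 t) <= t%:E)%E.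
Proof.
move=> t0; apply: (@le_trans _ _ (lebesgue_measure (`[0, t]%classic : set R))).
  apply: le_measure; rewrite ?inE; [exact: Xi_meas|exact: measurable_itv|].
  by move=> x [_]; rewrite /= in_itv.
rewrite lebesgue_measure_itv /=; case: ifP => _; last by rewrite lee_fin.
by rewrite -EFinD subr0.
Qed.

Lemma m_fin t : 0 <= t ->
  lebesgue_measure (Xi h tau 0 t) = (fine (lebesgue_measure (Xi h tau 0 t)))%:E.
Proof.
move=> t0; rewrite fineK // ge0_fin_numE ?measure_ge0 //.
exact: (le_lt_trans (m_le t0) (ltry _)).
Qed.

Lemma m_monoE t s : t <= s ->
  (lebesgue_measure (Xi h tau 0 t) <= lebesgue_measure (Xi h tau 0 s))%E.
Proof. by move=> ts; apply: le_measure; rewrite ?inE; [exact: Xi_meas|exact: Xi_meas|exact: Xi_mono]. Qed.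

Lemma m_subE t n : t < h n.+1 ->
  (lebesgue_measure (Xi h tau 0 t) <= lebesgue_measure (Xi h tau 0 (h n + tau n)))%E.
Proof. by move=> tn; apply: le_measure; rewrite ?inE; [exact: Xi_meas|exact: Xi_meas|exact: Xi_sub]. Qed.


Lemma h_inj : injective h.
Proof.
move=> i j hij; case: (ltngtP i j) => // ij.
  by have := h_ltn ij; rewrite hij ltxx.
by have := h_ltn ij; rewrite hij ltxx.
Qed.

Lemma C1 n : ((n.+1)%:R%:E <= n_xi h 0 (h n))%E.
Proof.
rewrite /n_xi /counting; case: ifPn => [/asboolP fS|_]; last exact: leey.
rewrite lee_fin ler_nat; apply: leq_card_fset_set => //.
apply: (@card_le_trans _ _ _ (h @` `I_n.+1)).
  have e : (`I_n.+1 #= h @` `I_n.+1)%card by apply: card_esym; apply: inj_card_eq => i j _ _; exact: h_inj.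
  by move: e; rewrite card_eq_le => /andP[].
apply: subset_card_le => _ [k /= kn <-]; split; first by exists k.
by apply/andP; split; [exact: h_ge0|exact: h_le].
Qed.

Lemma C2 t m : t < h m -> (n_xi h 0 t <= (m%:R)%:E)%E.
Proof.
move=> tm.
have sub : [set h n | n in [set: nat]] `&` [set x | 0 <= x <= t] `<=` h @` `I_m.
  move=> _ [[k _ <-] /andP[_ kt]]; exists k => //=.
  rewrite ltnNge; apply/negP => mk; have := h_le mk; rewrite leNgt => /negP; apply.
  exact: (le_lt_trans kt tm).
have fS := sub_finite_set sub (finite_image h (finite_II m)).
rewrite /n_xi /counting asboolT // lee_fin ler_nat; apply: geq_card_fset_set.
exact: (card_le_trans (subset_card_le sub) (card_image_le h `I_m)).
Qed.


Lemma hunb B : is_freq_bound h B -> forall K, exists j, K < h j.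
Proof.
move=> [B0 [L [L0 HL]]] K; apply: contrapT => nK.
have hK j : h j <= K by rewrite leNgt; apply/negP => Kj; apply: nK; exists j.
have [n Hn] := natr_big (L%:R + B * K).
have := le_trans (C1 n) (HL _ (h_ge0 n)); rewrite lee_fin => H1.
have H2 : B * h n <= B * K by rewrite ler_wpM2l // hK.
have H3 : (n%:R : R) <= (n.+1)%:R by rewrite ler_nat.
lra.
Qed.

Lemma hev B : is_freq_bound h B -> forall K, exists N, forall k, (N <= k)%N -> K < h k.
Proof.
move=> fb K; have [j Hj] := hunb fb K; exists j => k jk.
exact: (lt_le_trans Hj (h_le jk)).
Qed.

Lemma dur_ub B : (exists Bf, is_freq_bound h Bf) -> is_duration_bound h tau B ->
  (limn_esup (fun n => (lebesgue_measure (Xi h tau 0 (h n + tau n))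
                         * ((h n + tau n)^-1)%:E)%E) <= B%:E)%E.
Proof.
move=> [Bf fb] [/andP[B0 B1] [k [k0 Hk]]].
apply/lee_addgt0Pr => e e0.
have [N HN] := hev fb (k / e).
apply: (@limsup_le _ _ _ N) => n Nn.
have hs : k / e < h n + tau n by apply: (lt_le_trans (HN n Nn)); rewrite lerDl tau_ge0.
have s0 : 0 < h n + tau n by apply: lt_trans hs; exact: divr_gt0.
rewrite m_fin; last exact: ltW.
rewrite -EFinM -EFinD lee_fin.
have := Hk _ (ltW s0); rewrite m_fin ?(ltW s0) // lee_fin => H1.
move: hs; rewrite ltr_pdivrMr // => hs.
rewrite -/(_ / _) ler_pdivrMr //.
set s := h n + tau n in H1 hs s0 *.
set ms := fine _ in H1 *.
rewrite [fine _]/=; nra.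
Qed.


Lemma first_above B t : is_freq_bound h B ->
  exists m0, t < h m0 /\ forall j, t < h j -> (m0 <= j)%N.
Proof.
move=> fb; have [j Hj] := hunb fb t.
have ex : exists j, (fun j => t < h j) j by exists j.
case: (ex_minnP ex) => m0 Pm min; exists m0; split => // i Hi; exact: min.
Qed.

Lemma dur_bound B : 0 <= B <= 1 -> (exists G, 0 < G /\ forall n, tau n <= G) ->
  (exists Bf, is_freq_bound h Bf) ->
  (limn_esup (fun n => (lebesgue_measure (Xi h tau 0 (h n + tau n))
                         * ((h n + tau n)^-1)%:E)%E) < B%:E)%E ->
  is_duration_bound h tau B.
Proof.
move=> /andP[B0 B1] [G [G0 HG]] [Bf fb] /limsup_lt[N HN].
split; first by rewrite B0 B1.
have hN0 : 0 <= h N.+1 by exact: h_ge0.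
exists (h N.+1 + G + 1); split; first lra.
move=> t t0.
have Bt : 0 <= B * t by exact: mulr_ge0.
case: (ltP t (h N.+1)) => tN.
  apply: (le_trans (m_le t0)); rewrite lee_fin; lra.
have [m0 [Pm min]] := first_above t fb.
case: m0 Pm min => [|n] Pm min.
  exfalso; have := h_le (leq0n N.+1); lra.
have Nn : (N.+1 <= n)%N.
  rewrite leqNgt; apply/negP => nN.
  have := h_le nN; lra.
have hnt : h n <= t.
  rewrite leNgt; apply/negP => tn; have := min _ tn; rewrite ltnn //.
have s0 : 0 < h n + tau n.
  have := h_ltn (leq_ltn_trans (leq0n N) Nn); have := h_ge0 0; have := tau_ge0 n; lra.
apply: (le_trans (m_subE Pm)).
have := HN n (leq_trans (leqnSn N) Nn).
rewrite m_fin; last exact: ltW.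
rewrite -EFinM !lee_fin lte_fin -/(_ / _) ltr_pdivrMr // => H1.
have := HG n; have := tau_ge0 n.
set s := h n + tau n in H1 s0 *.
move=> ta tG.
have H2 : B * s <= B * t + G by rewrite /s; nra.
lra.
Qed.

Lemma freq_ub B : is_freq_bound h B ->
  (limn_esup (fun n => ((n.+1)%:R / h n)%:E) <= B%:E)%E.
Proof.
move=> fb; have [B0 [L [L0 HL]]] := fb.
apply/lee_addgt0Pr => e e0.
have [N HN] := hev fb (L%:R / e).
apply: (@limsup_le _ _ _ N) => n Nn.
have hs := HN n Nn.
have L0' : (0 : R) < L%:R by rewrite ltr0n.
have s0 : 0 < h n by apply: lt_trans hs; exact: divr_gt0.
rewrite -EFinD lee_fin.
have := le_trans (C1 n) (HL _ (ltW s0)); rewrite lee_fin => H1.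
move: hs; rewrite ltr_pdivrMr // => hs.
rewrite ler_pdivrMr //.
nra.
Qed.

Lemma freq_bound B : 0 <= B -> (exists Bf, is_freq_bound h Bf) ->
  (limn_esup (fun n => ((n.+1)%:R / h n)%:E) < B%:E)%E ->
  is_freq_bound h B.
Proof.
move=> B0 [Bf fb] /limsup_lt[N HN].
split => //; exists N.+1; split => // t t0.
have Bt : 0 <= B * t by exact: mulr_ge0.
have [m0 [Pm min]] := first_above t fb.
apply: (le_trans (C2 Pm)); rewrite lee_fin.
case: (leqP m0 N.+1) => mN.
  have : (m0%:R : R) <= N.+1%:R by rewrite ler_nat.
  lra.
case: m0 Pm min mN => [//|n] Pm min mN.
have hnt : h n <= t.
  rewrite leNgt; apply/negP => tn; have := min _ tn; rewrite ltnn //.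
have s0 : 0 < h n.
  have := h_ltn (leq_ltn_trans (leq0n N) mN); have := h_ge0 0; lra.
have := HN n (ltnW mN); rewrite lte_fin ltr_pdivrMr // => H1.
have : B * h n <= B * t by rewrite ler_wpM2l.
have : (0 : R) <= N.+1%:R by [].
lra.
Qed.

End Seq.

Unset Implicit Arguments. Set Strict Implicit.

Theorem lemma2 (R : realType) (h tau : nat -> R) :
  DoS h tau -> ~ edge_case h tau ->
  limn_esup (fun n => (lebesgue_measure (Xi h tau 0 (h n + tau n))
                         * ((h n + tau n)^-1)%:E)%E) = ereal_inf (Dset h tau)
  /\ limn_esup (fun n => ((n.+1)%:R / h n)%:E) = ereal_inf (Fset h).
Proof.
move=> hD nE.
have nD : ereal_inf (Dset h tau) <> 1%:E by move=> H; apply: nE; left.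
have nF : ereal_inf (Fset h) <> +oo%E by move=> H; apply: nE; right; left.
have [G [G0 HG]] : exists G, 0 < G /\ forall n, tau n <= G.
  apply: contrapT => nG; apply: nE; right; right => G G0.
  apply: contrapT => nn; apply: nG; exists G; split => // n.
  rewrite leNgt; apply/negP => Gn; apply: nn; by exists n.
have [Bf fb] : exists Bf, is_freq_bound h Bf.
  apply: contrapT => nb; apply: nF; apply/eqP; rewrite -leye_eq.
  apply: le_ereal_inf_tmp => y [[B [_ fbB]]|[-> _]] //.
  by exfalso; apply: nb; exists B.
split.
- set L := limn_esup _.
  have LD : (L <= ereal_inf (Dset h tau))%E.
    apply: le_ereal_inf_tmp => _ [B [-> db]].
    by apply: (dur_ub hD) => //; exists Bf.
  have one : is_duration_bound h tau 1.
    split; first by rewrite ler01 lexx.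
    exists 1; split => // t t0; apply: (le_trans (m_le h tau t0)); rewrite lee_fin; lra.
  have D1 : (ereal_inf (Dset h tau) <= 1%:E)%E by apply: ereal_inf_lbound; exists 1.
  have L1 : (L < 1%:E)%E.
    apply: (le_lt_trans LD); rewrite lt_neqAle D1 andbT; apply/eqP; exact: nD.
  have L0 : (0 <= L)%E.
    apply: limsup_ge0 => n; apply: mule_ge0; first exact: measure_ge0.
    by rewrite lee_fin invr_ge0 addr_ge0 // ?(h_ge0 hD) ?(tau_ge0 hD).
  have Lfin : L = (fine L)%:E.
    by rewrite fineK // ge0_fin_numE // (lt_trans L1) // ltry.
  apply/eqP; rewrite eq_le LD /=.
  rewrite Lfin; apply/lee_addgt0Pr => e e0.
  have r1 : fine L < 1 by rewrite -lte_fin -Lfin.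
  have r0 : 0 <= fine L by rewrite -lee_fin -Lfin.
  apply: (@le_trans _ _ (Num.min (fine L + e) 1)%:E); last first.
    by rewrite lee_fin ge_min lexx.
  apply: ereal_inf_lbound; exists (Num.min (fine L + e) 1); split => //.
  apply: (dur_bound hD) => //.
  + by rewrite le_min ge_min lexx orbT andbT; apply/andP; split => //; lra.
  + by exists G.
  + by exists Bf.
  + by rewrite -/L Lfin lte_fin lt_min r1 andbT; lra.
- set M := limn_esup _.
  have MF : (M <= ereal_inf (Fset h))%E.
    apply: le_ereal_inf_tmp => _ [[B [-> fbB]]|[-> _]]; last exact: leey.
    exact: (freq_ub hD).
  have M0 : (0 <= M)%E.
    by apply: limsup_ge0 => n; rewrite lee_fin divr_ge0 // (h_ge0 hD).
  have MB : (M <= Bf%:E)%E by exact: (freq_ub hD).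
  have Mfin : M = (fine M)%:E.
    by rewrite fineK // ge0_fin_numE //; exact: (le_lt_trans MB (ltry Bf)).
  apply/eqP; rewrite eq_le MF /=.
  rewrite Mfin; apply/lee_addgt0Pr => e e0.
  have r0 : 0 <= fine M by rewrite -lee_fin -Mfin.
  apply: ereal_inf_lbound; left; exists (fine M + e); split => //.
  apply: (freq_bound hD).
  + lra.
  + by exists Bf.
  + by rewrite -/M Mfin lte_fin; lra.
Qed.
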